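(* Suppose $\operatorname{tr}\big((I-\widehat\Pi)\Pi^*\big)\le\delta^2$ for some $\delta\in[0,1)$. Then for every $x\in\mathbb R^d$, $$|\Pi^*x|\le|\widehat\Pi^{1/2}x|+\delta|x|.$$
   Context: $\Pi^*$ is the orthogonal projector onto an $m^*$-dimensional subspace of $\mathbb R^d$. $I$ is the $d\times d$ identity, $|\cdot|$ the Euclidean norm, $A\preceq B$ means $B-A$ is positive semidefinite. Let $\hat\beta_1,\dots,\hat\beta_L\in\mathbb R^d$ be arbitrary vectors, $\mathcal A_{m^*}=\{\Pi\in\mathbb R^{d\times d}:\Pi=\Pi^\top,\ 0\preceq\Pi\preceq I,\ \operatorname{tr}\Pi\le m^*\}$, and let $\widehat\Pi$ be a minimizer over $\Pi\in\mathcal A_{m^*}$ of $\max_\ell\hat\beta_\ell^\top(I-\Pi)\hat\beta_\ell$; $\widehat\Pi^{1/2}$ is its positive semidefinite square root. *)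

(* Defs.v *)
From HB Require Import structures.
From mathcomp Require Import all_boot all_order all_algebra.
Set Implicit Arguments. Unset Strict Implicit. Unset Printing Implicit Defensive.
Import Order.TTheory GRing.Theory Num.Theory.
Local Open Scope ring_scope.

Section Defs.
Variable R : rcfType.

Definition qform (d : nat) (A : 'M[R]_d) (x : 'cV[R]_d) : R := (x^T *m A *m x) 0 0.

Definition enorm (d : nat) (x : 'cV[R]_d) : R := Num.sqrt ((x^T *m x) 0 0).

Definition psd (d : nat) (A : 'M[R]_d) : Prop :=
  A^T = A /\ forall x : 'cV[R]_d, 0 <= qform A x.

Definition loewner_le (d : nat) (A B : 'M[R]_d) : Prop := psd (B - A).

Definition orth_proj (d m : nat) (P : 'M[R]_d) : Prop :=
  P^T = P /\ P *m P = P /\ \rank P = m.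

Definition in_Aset (d m : nat) (P : 'M[R]_d) : Prop :=
  P^T = P /\ loewner_le 0 P /\ loewner_le P 1%:M /\ \tr P <= m%:R.

(* objective max_l beta_l^T (I - P) beta_l (values are nonnegative on A_m) *)
Definition objective (d L : nat) (beta : 'I_L -> 'cV[R]_d) (P : 'M[R]_d) : R :=
  \big[Num.max/0]_(l < L) qform (1%:M - P) (beta l).

Definition is_minimizer (d m L : nat) (beta : 'I_L -> 'cV[R]_d) (P : 'M[R]_d) : Prop :=
  in_Aset m P /\ forall Q : 'M[R]_d, in_Aset m Q -> objective beta P <= objective beta Q.

Definition is_psd_sqrt (d : nat) (S P : 'M[R]_d) : Prop := psd S /\ S *m S = P.
End Defs.

(* Main.v *)
Require Import Defs.
From HB Require Import structures.
From mathcomp Require Import all_boot all_order all_algebra.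
From mathcomp Require Import ring lra.
Set Implicit Arguments. Unset Strict Implicit.
Import Order.TTheory GRing.Theory Num.Theory.
Local Open Scope ring_scope.

Section Aux.
Variable R : rcfType.

Lemma cs_sum (n : nat) (u v : 'I_n -> R) :
  (\sum_i u i * v i) ^+ 2 <= (\sum_i u i * u i) * (\sum_i v i * v i).
Proof.
set a := \sum_i u i * u i; set b := \sum_i u i * v i; set c := \sum_i v i * v i.
have c0 : 0 <= c by apply: sumr_ge0 => i _; exact: mulr_ge0_le0 || rewrite -expr2 sqr_ge0.
have key : 0 <= c * (a * c - b ^+ 2).
  have -> : c * (a * c - b ^+ 2) = \sum_i (c * u i - b * v i) ^+ 2.
    transitivity (\sum_i (c^+2 * (u i * u i) - (2 * c * b) * (u i * v i) + b^+2 * (v i * v i))).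
      rewrite big_split sumrB /= -!mulr_sumr -/a -/b -/c; ring.
    by apply: eq_bigr => i _; ring.
  by apply: sumr_ge0 => i _; rewrite sqr_ge0.
move: c0; rewrite le_eqVlt => /orP [/eqP c0'|cpos]; last first.
  by rewrite -subr_ge0; move: key; rewrite pmulr_rge0.
have v0 : forall i, v i * v i = 0.
  move=> i; apply: (psumr_eq0P (P := xpredT) (F := fun i => v i * v i)) => //.
  by move=> j _; rewrite -expr2 sqr_ge0.
have -> : b = 0.
  rewrite /b big1 // => i _.
  have : v i * v i == 0 by rewrite v0.
  by rewrite mulf_eq0 orbb => /eqP ->; rewrite mulr0.
by rewrite expr0n /= mulr_ge0 //; apply: sumr_ge0 => i _; rewrite -expr2 sqr_ge0.
Qed.

Definition dot (n : nat) (u v : 'cV[R]_n) : R := (u^T *m v) 0 0.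

Lemma dotE n (u v : 'cV[R]_n) : dot u v = \sum_i u i 0 * v i 0.
Proof. by rewrite /dot !mxE; apply: eq_bigr => i _; rewrite !mxE. Qed.

Lemma dot_ge0 n (u : 'cV[R]_n) : 0 <= dot u u.
Proof. by rewrite dotE; apply: sumr_ge0 => i _; rewrite -expr2 sqr_ge0. Qed.

Lemma enormE n (u : 'cV[R]_n) : enorm u = Num.sqrt (dot u u).
Proof. by []. Qed.

Lemma enorm_ge0 n (u : 'cV[R]_n) : 0 <= enorm u.
Proof. exact: sqrtr_ge0. Qed.

Lemma dot_cs n (u v : 'cV[R]_n) : dot u v ^+ 2 <= dot u u * dot v v.
Proof. by rewrite !dotE; apply: cs_sum. Qed.

Lemma enorm_triangle n (u v : 'cV[R]_n) : enorm (u + v) <= enorm u + enorm v.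
Proof.
rewrite [X in _ <= X]
  (_ : _ = Num.sqrt ((enorm u + enorm v) ^+ 2)); last first.
  by rewrite sqrtr_sqr ger0_norm // addr_ge0 // enorm_ge0.
rewrite enormE; apply: ler_wsqrtr.
have -> : dot (u + v) (u + v) = dot u u + 2 * dot u v + dot v v.
  rewrite !dotE.
  transitivity (\sum_i (u i 0 * u i 0 + 2 * (u i 0 * v i 0) + v i 0 * v i 0)).
    by apply: eq_bigr => i _; rewrite !mxE; ring.
  by rewrite !big_split /= -mulr_sumr.
rewrite sqrrD !sqr_sqrtr ?dot_ge0 // lerD2r lerD2l -mulr_natl ?mulr1.
suff h : dot u v <= enorm u * enorm v by rewrite mulr2n; lra.
apply: (le_trans (ler_norm _)).
rewrite !enormE -sqrtrM ?dot_ge0 // -(sqrtr_sqr (dot u v)).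
exact: ler_wsqrtr (dot_cs u v).
Qed.

Lemma qformB n (A B : 'M[R]_n) x : qform (A - B) x = qform A x - qform B x.
Proof. by rewrite /qform mulmxBr mulmxBl !mxE. Qed.

Lemma dotM n (A : 'M[R]_n) x : dot (A *m x) (A *m x) = qform (A^T *m A) x.
Proof. by rewrite /dot /qform trmx_mul !mulmxA. Qed.

Lemma dot_qform n (x : 'cV[R]_n) : dot x x = qform 1%:M x.
Proof. by rewrite /dot /qform mulmx1. Qed.

Lemma qform_congr n (A B : 'M[R]_n) x :
  qform (B^T *m A *m B) x = qform A (B *m x).
Proof. by rewrite /qform trmx_mul !mulmxA. Qed.

Lemma tr_congr_ge0 n (A B : 'M[R]_n) :
  (forall y, 0 <= qform A y) -> 0 <= \tr (B^T *m A *m B).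
Proof.
move=> hA; rewrite /mxtrace; apply: sumr_ge0 => i _.
have -> : (B^T *m A *m B) i i = qform A (col i B).
  rewrite /qform !mxE; apply: eq_bigr => k _; rewrite !mxE; congr (_ * _).
  by apply: eq_bigr => l _; rewrite !mxE.
exact: hA.
Qed.

Lemma frob_bound n (M : 'M[R]_n) x :
  dot (M *m x) (M *m x) <= \tr (M *m M^T) * dot x x.
Proof.
rewrite dotE /mxtrace mulr_suml; apply: ler_sum => i _.
have -> : (M *m x) i 0 * (M *m x) i 0 = (\sum_j M i j * x j 0) ^+ 2.
  by rewrite expr2 !mxE.
have -> : (M *m M^T) i i = \sum_j M i j * M i j.
  by rewrite mxE; apply: eq_bigr => j _; rewrite mxE.
rewrite dotE; exact: cs_sum.
Qed.

Lemma trB n (X Y : 'M[R]_n) : \tr (X - Y) = \tr X - \tr Y.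
Proof. exact: raddfB. Qed.

End Aux.

Theorem lemma2 (R : rcfType) (d mstar L : nat) (Pistar : 'M[R]_d)
  (beta : 'I_L -> 'cV[R]_d) (Pihat Pihat_sqrt : 'M[R]_d) (delta : R) :
  (0 < L)%N ->
  orth_proj mstar Pistar ->
  is_minimizer mstar beta Pihat ->
  is_psd_sqrt Pihat_sqrt Pihat ->
  0 <= delta -> delta < 1 ->
  \tr ((1%:M - Pihat) *m Pistar) <= delta ^+ 2 ->
  forall x : 'cV[R]_d,
    enorm (Pistar *m x) <= enorm (Pihat_sqrt *m x) + delta * enorm x.
Proof.
move=> _ [PT [PP _]] [[HT [_ [[_ Aq] _]]] _] [[ST _] SS] d0 _ htr x.
set P := Pistar in PT PP htr *; set H := Pihat in HT Aq SS htr *; set S := Pihat_sqrt in ST SS *.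
set A := 1%:M - H in Aq htr *.
have Aq' : forall y, 0 <= qform A y by move=> y; exact: Aq.
have AT : A^T = A by rewrite /A [(1%:M - H)^T]raddfB /= trmx1 HT.
have AH : A - A *m A = H - H *m H.
  by rewrite /A mulmxBl mul1mx mulmxBr mulmx1 subKr.
have SAS : S *m A *m S = H - H *m H.
  rewrite /A mulmxBr mulmx1 mulmxBl SS; congr (_ - _).
  by rewrite -SS !mulmxA.
have AAS : A - A *m A = S^T *m A *m S by rewrite ST SAS AH.
have split : P *m x = P *m (H *m x) + P *m (A *m x).
  by rewrite !mulmxA -mulmxDl -mulmxDr /A addrC subrK mulmx1.
rewrite split; apply: (le_trans (enorm_triangle _ _)); apply: lerD.
- rewrite !enormE; apply: ler_wsqrtr.
  set z := H *m x.
  apply: (@le_trans _ _ (dot z z)).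
    rewrite -subr_ge0 dotM dot_qform -qformB.
    have -> : 1%:M - P^T *m P = (1%:M - P)^T *m 1%:M *m (1%:M - P).
      rewrite mulmx1 PT PP [(1%:M - P)^T]raddfB /= trmx1 PT mulmxBl mul1mx mulmxBr mulmx1 PP.
      by rewrite subrr subr0.
    by rewrite qform_congr -dot_qform dot_ge0.
  rewrite /z -subr_ge0 !dotM -qformB ST SS HT.
  have -> : H - H *m H = S^T *m A *m S by rewrite -AAS AH.
  by rewrite qform_congr.
- rewrite !enormE.
  have -> : delta * Num.sqrt (dot x x) = Num.sqrt (delta ^+ 2 * dot x x).
    by rewrite sqrtrM ?sqr_ge0 // sqrtr_sqr ger0_norm.
  apply: ler_wsqrtr.
  rewrite mulmxA; apply: (le_trans (frob_bound _ _)).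
  apply: ler_wpM2r; first exact: dot_ge0.
  apply: le_trans htr.
  have -> : \tr ((P *m A) *m (P *m A)^T) = \tr ((A *m A) *m P).
    rewrite trmx_mul PT AT mulmxA mxtrace_mulC !mulmxA.
    by rewrite PP -mulmxA mxtrace_mulC.
  rewrite -subr_ge0.
  have -> : \tr (A *m P) - \tr (A *m A *m P) = \tr (P^T *m (S^T *m A *m S) *m P).
    rewrite PT [RHS]mxtrace_mulC [P *m (P *m _)]mulmxA PP [RHS]mxtrace_mulC -AAS (mulmxBl A (A *m A) P).
    by rewrite trB.
  apply: (@tr_congr_ge0 _ _ (S^T *m A *m S) P) => y.
  by rewrite qform_congr.
Qed.
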